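(* Fix $t>1$ and let $(g_{n,t})_{n\ge0}$ be defined by $g_{0,t}=1$, $g_{n,t}=n\,g_{n-1,t}^{\,t}$ $(n\ge1)$, and let $\sigma_t=\prod_{n=1}^\infty n^{1/t^n}$. Then as $n\to\infty$, $$g_{n,t}=\sigma_t^{\,t^n}n^{-1/(t-1)}\left[1+\frac{t}{(1-t)^2n}-\frac{t(t^2-t-1)}{2(1-t)^4n^2}+\frac{t(2t^4+t^3-11t^2+7t+2)}{6(1-t)^6n^3}+O\!\left(\frac1{n^4}\right)\right]^{-1}.$$ *)

(* Defs.v *)
From Stdlib Require Import Reals Lra.
From Coquelicot Require Import Coquelicot.
Open Scope R_scope.

Fixpoint g (t : R) (n : nat) : R :=
  match n with
  | O => 1
  | S m => INR (S m) * Rpower (g t m) t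
  end.

Fixpoint sigma_partial (t : R) (N : nat) : R :=
  match N with
  | O => 1
  | S m => sigma_partial t m * Rpower (INR (S m)) (/ t ^ (S m))
  end.

Definition sigma_t (t : R) : R := real (Lim_seq (sigma_partial t)).

(* the bracketed polynomial correction in 1/n (without the leading 1) *)
Definition corr (t : R) (n : nat) : R :=
  let x := INR n in
  t / ((1 - t) ^ 2 * x)
  - t * (t ^ 2 - t - 1) / (2 * (1 - t) ^ 4 * x ^ 2)
  + t * (2 * t ^ 4 + t ^ 3 - 11 * t ^ 2 + 7 * t + 2) / (6 * (1 - t) ^ 6 * x ^ 3).

(* Main.v *)
Require Import Defs.
From Stdlib Require Import Reals Lra Lia Psatz.
From Coquelicot Require Import Coquelicot.
Open Scope R_scope.

Lemma g_pos t n : 0 < g t n.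
Proof.
  induction n as [|n IH].
  - simpl; lra.
  - change (g t (S n)) with (INR (S n) * Rpower (g t n) t). apply Rmult_lt_0_compat. apply lt_0_INR; lia. unfold Rpower; apply exp_pos.
Qed.

Lemma ln_g_S t n : ln (g t (S n)) = ln (INR (S n)) + t * ln (g t n).
Proof.
  change (g t (S n)) with (INR (S n) * Rpower (g t n) t).
  rewrite ln_mult. unfold Rpower; rewrite ln_exp; ring.
  apply lt_0_INR; lia. unfold Rpower; apply exp_pos.
Qed.

Lemma sp_pos t n : 0 < sigma_partial t n.
Proof.
  induction n as [|n IH].
  - simpl; lra.
  - change (sigma_partial t (S n)) with
    (sigma_partial t n * Rpower (INR (S n)) (/ t ^ (S n))). apply Rmult_lt_0_compat. exact IH. unfold Rpower; apply exp_pos.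
Qed.

Definition lsp t n := ln (sigma_partial t n).

Lemma lsp_S t n : lsp t (S n) = lsp t n + / t ^ (S n) * ln (INR (S n)).
Proof.
  unfold lsp. change (sigma_partial t (S n)) with
    (sigma_partial t n * Rpower (INR (S n)) (/ t ^ (S n))).
  rewrite ln_mult. unfold Rpower; rewrite ln_exp; ring.
  apply sp_pos. unfold Rpower; apply exp_pos.
Qed.

Lemma lng_eq t n : 1 < t -> ln (g t n) = t ^ n * lsp t n.
Proof.
  intro ht. induction n as [|n IH].
  - simpl. unfold lsp; simpl. rewrite ln_1; ring.
  - rewrite ln_g_S, IH, lsp_S. simpl pow.
    field. split; [apply pow_nonzero|]; lra.
Qed.

Lemma ln_le_id y : 0 < y -> ln y <= y - 1.
Proof.
  intro hy. pose proof (exp_ineq1_le (ln y)). rewrite exp_ln in H; lra.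
Qed.

(* sum k q^k bound *)
Definition Gs (q : R) (m : nat) :=
  (q - (INR m + 1) * q ^ m * q + INR m * q ^ m * q * q) / (1 - q) ^ 2.

Lemma Gs_S q m : q <> 1 -> Gs q (S m) = Gs q m + (INR m + 1) * (q ^ m * q).
Proof.
  intro hq. unfold Gs. rewrite S_INR. simpl pow.
  field. intro h. apply hq. nra.
Qed.

Lemma Gs_bound q m : 0 < q < 1 -> Gs q m <= q / (1 - q) ^ 2.
Proof.
  intro hq. unfold Gs. apply Rmult_le_compat_r.
  apply Rlt_le, Rinv_0_lt_compat. nra.
  pose proof (pow_le q m ltac:(lra)). pose proof (pos_INR m).
  assert (0 <= (INR m + 1) * q ^ m * q - INR m * q ^ m * q * q).
  { replace ((INR m + 1) * q ^ m * q - INR m * q ^ m * q * q) with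
     (q ^ m * q * (INR m * (1 - q) + 1)) by ring.
    apply Rmult_le_pos. apply Rmult_le_pos; lra. nra. }
  lra.
Qed.

Lemma lsp_bound t n : 1 < t -> lsp t n <= Gs (/ t) n.
Proof.
  intro ht. assert (hq : 0 < / t < 1).
  { split. apply Rinv_0_lt_compat; lra. rewrite <- Rinv_1. apply Rinv_lt_contravar; lra. }
  induction n as [|n IH].
  - unfold lsp, Gs; simpl. rewrite ln_1. field_simplify. lra. nra.
  - rewrite lsp_S, Gs_S by lra.
    apply Rplus_le_compat. exact IH.
    assert (ln (INR (S n)) <= INR n + 1).
    { pose proof (ln_le_id (INR (S n)) ltac:(apply lt_0_INR; lia)). rewrite S_INR in *. lra. }
    assert (0 <= (/ t) ^ n * / t) by (apply Rmult_le_pos; [apply pow_le|]; lra).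
    replace (/ t ^ S n) with ((/ t) ^ n * / t) by (rewrite <- Rinv_pow by lra; simpl; field; split; [apply pow_nonzero|]; lra).
    rewrite (Rmult_comm (INR n + 1)). apply Rmult_le_compat_l; lra.
Qed.

Lemma sp_incr t n : 1 < t -> sigma_partial t n <= sigma_partial t (S n).
Proof.
  intro ht. change (sigma_partial t (S n)) with
    (sigma_partial t n * Rpower (INR (S n)) (/ t ^ (S n))).
  rewrite <- (Rmult_1_r (sigma_partial t n)) at 1.
  apply Rmult_le_compat_l. apply Rlt_le, sp_pos.
  unfold Rpower. pose proof (exp_ineq1_le (/ t ^ (S n) * ln (INR (S n)))).
  assert (0 <= / t ^ (S n) * ln (INR (S n))).
  { apply Rmult_le_pos. apply Rlt_le, Rinv_0_lt_compat. apply pow_lt; lra.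
    rewrite <- ln_1. apply ln_le. lra. apply (le_INR 1). lia. }
  lra.
Qed.

Lemma exp_le_m x y : x <= y -> exp x <= exp y.
Proof. intro h. destruct (Rle_lt_or_eq_dec _ _ h) as [h'|h']. apply Rlt_le, exp_increasing; exact h'. subst; lra. Qed.

Lemma sigma_lim t : 1 < t ->
  0 < sigma_t t /\ is_lim_seq (sigma_partial t) (sigma_t t).
Proof.
  intro ht. assert (hq : 0 < / t < 1).
  { split. apply Rinv_0_lt_compat; lra. rewrite <- Rinv_1. apply Rinv_lt_contravar; lra. }
  destruct (ex_finite_lim_seq_incr (sigma_partial t) (exp (/ t / (1 - / t) ^ 2))) as [l Hl].
  - intro n; apply sp_incr; lra.
  - intro n. rewrite <- (exp_ln (sigma_partial t n)) by apply sp_pos.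
    apply exp_le_m. eapply Rle_trans. apply (lsp_bound t n ht). apply Gs_bound; lra.
  - assert (Hs : sigma_t t = l). { unfold sigma_t. rewrite (is_lim_seq_unique _ _ Hl). reflexivity. }
    rewrite Hs. split; [|exact Hl].
    assert (Rbar_le 1 l).
    { apply (is_lim_seq_le (fun _ => 1) (sigma_partial t)). 
      intro n; induction n. simpl; lra. eapply Rle_trans. exact IHn. apply sp_incr; lra.
      apply is_lim_seq_const. exact Hl. }
    simpl in H; lra.
Qed.

Definition LL t := ln (sigma_t t).

Lemma lsp_lim t : 1 < t -> is_lim_seq (lsp t) (LL t).
Proof.
  intro ht. destruct (sigma_lim t ht) as [h1 h2].
  unfold lsp, LL. apply is_lim_seq_continuous; [|exact h2].
  apply continuity_pt_filterlim. apply continuous_ln. exact h1.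
Qed.

Definition u t n := t ^ n * (LL t - lsp t n) - ln (INR n) / (t - 1).

Lemma u_rec t n : 1 < t -> (1 <= n)%nat ->
  u t n - u t (S n) / t = ln (1 + / INR n) / (t - 1).
Proof.
  intros ht hn. unfold u. rewrite lsp_S.
  assert (0 < INR n) by (apply lt_0_INR; lia).
  replace (1 + / INR n) with (INR (S n) * / INR n) by (rewrite S_INR; field; lra).
  rewrite ln_mult, ln_Rinv; try lra. 2: apply lt_0_INR; lia. 2: apply Rinv_0_lt_compat; lra.
  simpl pow. field. split; [lra|]. split; [apply pow_nonzero; lra|]. lra.
Qed.

Lemma main_id t n : 1 < t ->
  Rpower (sigma_t t) (t ^ n) * Rpower (INR n) (- / (t - 1)) = exp (u t n) * g t n.
Proof.
  intro ht. rewrite <- (exp_ln (g t n)) by apply g_pos.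
  rewrite lng_eq by lra. unfold Rpower, u, LL. rewrite <- !exp_plus. f_equal. field. lra.
Qed.

Lemma abs_btw a b : Rabs a <= b -> -b <= a <= b.
Proof. intro h. unfold Rabs in h. destruct (Rcase_abs a); lra. Qed.

Definition T3 (y : R) := y - y ^ 2 / 2 + y ^ 3 / 3.

Lemma ln_taylor y : Rabs y <= / 2 -> Rabs (ln (1 + y) - T3 y) <= 2 * y ^ 4.
Proof.
  intro hy. apply abs_btw in hy.
  set (f := fun z => ln (1 + z) - T3 z).
  set (f' := fun z => - (z ^ 3 / (1 + z))).
  assert (Hd : forall c, -/2 <= c -> derivable_pt_lim f c (f' c)).
  { intros c hc. apply is_derive_Reals. unfold f, f', T3. auto_derive. lra. field. lra. }
  assert (f0 : f 0 = 0). { unfold f, T3. rewrite Rplus_0_r, ln_1. field. }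
  change (ln (1 + y) - T3 y) with (f y).
  destruct (Rtotal_order y 0) as [hneg | [hz | hpos]].
  - destruct (MVT_cor2 f f' y 0 hneg) as [c [hc1 hc2]].
    { intros c hc; apply Hd; lra. }
    rewrite f0 in hc1. unfold f' in hc1.
    assert (hf : f y = c ^ 3 / (1 + c) * (0 - y)) by lra.
    rewrite hf. apply Rabs_le.
    assert (0 < 1 + c) by lra.
    assert (hc3 : c ^ 3 <= 0) by nra.
    assert (hw : c ^ 3 / (1 + c) * (1 + c) = c ^ 3) by (field; lra).
    set (w := c ^ 3 / (1 + c)) in *.
    assert (w <= 0) by nra.
    assert (w - 2 * c ^ 3 = - w * (1 + 2 * c)) by (rewrite <- hw; ring).
    assert (0 <= - w * (1 + 2 * c)) by (apply Rmult_le_pos; lra).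
    assert (y ^ 3 <= c ^ 3) by (assert (0 <= c * c + c * y + y * y) by nra; simpl; nra).
    assert (-2 * (- y) ^ 3 <= w) by (simpl in *; nra).
    split; nra.
  - subst. rewrite f0, Rabs_R0. simpl. lra.
  - destruct (MVT_cor2 f f' 0 y hpos) as [c [hc1 hc2]].
    { intros c hc; apply Hd; lra. }
    rewrite f0 in hc1. unfold f' in hc1.
    assert (hf : f y = - (c ^ 3 / (1 + c)) * y) by lra.
    rewrite hf. apply Rabs_le.
    assert (0 < 1 + c) by lra.
    assert (hw : c ^ 3 / (1 + c) * (1 + c) = c ^ 3) by (field; lra).
    set (w := c ^ 3 / (1 + c)) in *.
    assert (0 <= w) by nra.
    assert (w <= w * (1 + c)) by nra.
    assert (c ^ 3 <= y ^ 3) by (apply pow_incr; lra).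
    assert (w <= y ^ 3) by nra.
    split; nra.
Qed.

Lemma exp_m1 d : Rabs d <= / 2 -> Rabs (exp d - 1) <= 2 * Rabs d.
Proof.
  intro hd. apply abs_btw in hd.
  pose proof (exp_ineq1_le d). pose proof (exp_ineq1_le (- d)).
  assert (exp d * exp (- d) = 1) by (rewrite <- exp_plus; replace (d + - d) with 0 by ring; apply exp_0).
  pose proof (exp_pos d). pose proof (exp_pos (-d)).
  assert (exp d * (1 - d) <= 1) by nra.
  apply Rabs_le. destruct (Rle_lt_dec 0 d).
  - rewrite Rabs_right by lra. split; nra.
  - rewrite Rabs_left by lra. split; nra.
Qed.

Lemma ba_plus a b A B : Rabs a <= A -> Rabs b <= B -> Rabs (a + b) <= A + B.
Proof. intros; eapply Rle_trans. apply Rabs_triang. lra. Qed.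
Lemma ba_minus a b A B : Rabs a <= A -> Rabs b <= B -> Rabs (a - b) <= A + B.
Proof. intros; eapply Rle_trans. apply Rabs_triang. rewrite Rabs_Ropp. lra. Qed.
Lemma ba_opp a A : Rabs a <= A -> Rabs (- a) <= A.
Proof. rewrite Rabs_Ropp; auto. Qed.
Lemma ba_mult a b A B : Rabs a <= A -> Rabs b <= B -> Rabs (a * b) <= A * B.
Proof. intros. rewrite Rabs_mult. pose proof (Rabs_pos a). pose proof (Rabs_pos b).
  apply Rmult_le_compat; auto. Qed.
Lemma ba_div a b A B : Rabs a <= A -> Rabs (/ b) <= B -> Rabs (a / b) <= A * B.
Proof. intros; apply ba_mult; auto. Qed.
Lemma ba_pow a n A : Rabs a <= A -> Rabs (a ^ n) <= A ^ n.
Proof. intros. rewrite <- RPow_abs. apply pow_incr. split; auto. apply Rabs_pos. Qed.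

Ltac bnd := first
  [ eapply ba_plus; [bnd | bnd]
  | eapply ba_minus; [bnd | bnd]
  | eapply ba_opp; bnd
  | eapply ba_div; [bnd | apply Rle_refl]
  | eapply ba_mult; [bnd | bnd]
  | eapply ba_pow; bnd
  | eassumption
  | apply Rle_refl ].

Lemma test (c1 : R) : exists K, forall x, Rabs x <= 1 -> Rabs (c1 * x ^ 2 - x / 3 + 2) <= K.
Proof. eexists. intros x hx. bnd. Qed.

Definition cc1 t := t / (1 - t) ^ 2.
Definition cc2 t := - (t * (t ^ 2 - t - 1) / (2 * (1 - t) ^ 4)).
Definition cc3 t := t * (2 * t ^ 4 + t ^ 3 - 11 * t ^ 2 + 7 * t + 2) / (6 * (1 - t) ^ 6).
Definition cp t x := cc1 t * x + cc2 t * x ^ 2 + cc3 t * x ^ 3.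
Definition p1 t := cc1 t.
Definition p2 t := cc2 t - cc1 t ^ 2 / 2.
Definition p3 t := cc3 t - cc1 t * cc2 t + cc1 t ^ 3 / 3.
Definition PP t x := p1 t * x + p2 t * x ^ 2 + p3 t * x ^ 3.

Lemma corr_eq t n : 1 < t -> INR n <> 0 -> corr t n = cp t (/ INR n).
Proof. intros ht hn. unfold corr, cp, cc1, cc2, cc3. field. repeat split; try lra; exact hn. Qed.

Definition WW t x :=
  let a := cc1 t in let b := cc2 t in let c := cc3 t in
  - (b ^ 2 + 2 * a * c) / 2 - b * c * x - c ^ 2 * x ^ 2 / 2
  + (3 * a ^ 2 * b + (3 * a ^ 2 * c + 3 * a * b ^ 2) * x + (b ^ 3 + 6 * a * b * c) * x ^ 2
     + (3 * a * c ^ 2 + 3 * b ^ 2 * c) * x ^ 3 + 3 * b * c ^ 2 * x ^ 4 + c ^ 3 * x ^ 5) / 3.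

Lemma W_id t x : T3 (cp t x) - PP t x = x ^ 4 * WW t x.
Proof. unfold T3, cp, PP, WW, p1, p2, p3. field. Qed.

Definition VV t x :=
  (/ 2 + x / 2 + x ^ 2 / 3) / (t - 1) - (p1 t + 3 * p2 t + 3 * p3 t)
  - (p2 t + 3 * p3 t) * x - p3 t * x ^ 2.

Lemma V_id t x : 1 < t -> 0 <= x ->
  T3 x / (t - 1) + PP t (x / (1 + x)) / t - PP t x = x ^ 4 * VV t x / (1 + x) ^ 3.
Proof.
  intros ht hx. unfold T3, PP, VV, p1, p2, p3, cc1, cc2, cc3.
  field. repeat split; lra.
Qed.

Lemma bern s J : 1 < s -> INR J * (s - 1) <= s ^ J.
Proof.
  intro hs. induction J as [|J IH].
  - simpl; lra.
  - rewrite S_INR. simpl pow. pose proof (pos_INR J).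
    assert (1 <= s ^ J) by (apply pow_R1_Rle; lra). nra.
Qed.

Lemma JqJ q : 0 < q < 1 -> is_lim_seq (fun J => INR J * q ^ J) 0.
Proof.
  intro hq. set (r := sqrt q).
  assert (hr0 : 0 < r) by (apply sqrt_lt_R0; lra).
  assert (hrr : r * r = q) by (apply sqrt_sqrt; lra).
  assert (hr1 : r < 1). { unfold r. rewrite <- sqrt_1. apply sqrt_lt_1; lra. }
  set (s := / r).
  assert (hs : 1 < s). { unfold s. rewrite <- Rinv_1. apply Rinv_lt_contravar; lra. }
  assert (hsr : s * r = 1) by (unfold s; field; lra).
  apply is_lim_seq_le_le with (u := fun _ => 0) (w := fun J => r ^ J * / (s - 1)).
  - intro J. assert (hqJ : q ^ J = r ^ J * r ^ J) by (rewrite <- hrr; apply Rpow_mult_distr).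
    pose proof (pos_INR J). assert (0 < r ^ J) by (apply pow_lt; lra).
    split. rewrite hqJ. apply Rmult_le_pos; nra.
    assert (INR J * r ^ J <= / (s - 1)).
    { pose proof (bern s J hs).
      assert (INR J * (s - 1) * r ^ J <= 1).
      { apply Rle_trans with (s ^ J * r ^ J). apply Rmult_le_compat_r; lra.
        rewrite <- Rpow_mult_distr, hsr, pow1. lra. }
      apply Rmult_le_reg_r with (s - 1). lra. rewrite Rinv_l by lra. nra. }
    rewrite hqJ. replace (INR J * (r ^ J * r ^ J)) with ((INR J * r ^ J) * r ^ J) by ring.
    rewrite (Rmult_comm (r ^ J)). apply Rmult_le_compat_r; lra.
  - apply is_lim_seq_const.
  - replace (Finite 0) with (Rbar_mult 0 (/ (s - 1))) by (simpl; f_equal; ring).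
    apply is_lim_seq_scal_r. apply is_lim_seq_geom. rewrite Rabs_right; lra.
Qed.

Lemma geom_t t : 1 < t -> is_lim_seq (fun J => (/ t) ^ J) 0.
Proof.
  intro ht. apply is_lim_seq_geom. rewrite Rabs_right.
  rewrite <- Rinv_1. apply Rinv_lt_contravar; lra. apply Rle_ge, Rlt_le, Rinv_0_lt_compat; lra.
Qed.

Lemma bounded_geom t (f : nat -> R) K : 1 < t -> (forall J, Rabs (f J) <= K) ->
  is_lim_seq (fun J => f J * (/ t) ^ J) 0.
Proof.
  intros ht hK.
  apply is_lim_seq_le_le with (u := fun J => - K * (/ t) ^ J) (w := fun J => K * (/ t) ^ J).
  - intro J. assert (0 <= (/ t) ^ J) by (apply pow_le; apply Rlt_le, Rinv_0_lt_compat; lra).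
    specialize (hK J). apply abs_btw in hK. split; nra.
  - replace (Finite 0) with (Rbar_mult (- K) 0) by (simpl; f_equal; ring).
    apply is_lim_seq_scal_l, geom_t, ht.
  - replace (Finite 0) with (Rbar_mult K 0) by (simpl; f_equal; ring).
    apply is_lim_seq_scal_l, geom_t, ht.
Qed.

Definition dd t m := u t m - PP t (/ INR m).

Lemma inv_INR_le m : (2 <= m)%nat -> 0 < / INR m <= / 2.
Proof.
  intro hm. assert (2 <= INR m) by (apply (le_INR 2); lia).
  split. apply Rinv_0_lt_compat; lra. apply Rinv_le_contravar; lra.
Qed.

Lemma r_bound t KV : 1 < t -> (forall x, Rabs x <= 1 -> Rabs (VV t x) <= KV) ->
  forall m, (2 <= m)%nat ->
  Rabs (dd t m - dd t (S m) / t) <= (2 / (t - 1) + KV) * (/ INR m) ^ 4.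
Proof.
  intros ht hKV m hm. destruct (inv_INR_le m hm) as [hx0 hx1].
  set (x := / INR m) in *.
  assert (hS : / INR (S m) = x / (1 + x)).
  { unfold x. rewrite S_INR. assert (0 < INR m) by (apply lt_0_INR; lia). field. lra. }
  assert (E : dd t m - dd t (S m) / t =
     (ln (1 + x) - T3 x) / (t - 1) + (T3 x / (t - 1) + PP t (x / (1 + x)) / t - PP t x)).
  { unfold dd. rewrite <- hS. fold x.
    replace (u t m - PP t x - (u t (S m) - PP t (/ INR (S m))) / t) with
      ((u t m - u t (S m) / t) - PP t x + PP t (/ INR (S m)) / t) by (field; lra).
    rewrite u_rec by (lra || lia). fold x. rewrite hS. field. lra. }
  rewrite E, V_id by lra.
  eapply Rle_trans. apply Rabs_triang. rewrite Rmult_plus_distr_r.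
  apply Rplus_le_compat.
  - unfold Rdiv. rewrite Rabs_mult, (Rabs_right (/ (t - 1))).
    2: apply Rle_ge, Rlt_le, Rinv_0_lt_compat; lra.
    replace (2 * / (t - 1) * x ^ 4) with (2 * x ^ 4 * / (t - 1)) by ring.
    apply Rmult_le_compat_r. apply Rlt_le, Rinv_0_lt_compat; lra.
    apply ln_taylor. rewrite Rabs_right; lra.
  - assert (h1 : 1 <= (1 + x) ^ 3) by (apply pow_R1_Rle; lra).
    assert (hv : Rabs (VV t x) <= KV) by (apply hKV; rewrite Rabs_right; lra).
    assert (h4 : 0 <= x ^ 4) by (apply pow_le; lra).
    unfold Rdiv. rewrite !Rabs_mult, Rabs_Rinv by lra.
    rewrite (Rabs_right (x ^ 4)) by lra. rewrite (Rabs_right ((1 + x) ^ 3)) by lra.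
    assert (0 < / (1 + x) ^ 3 <= 1).
    { split. apply Rinv_0_lt_compat; lra. rewrite <- Rinv_1. apply Rinv_le_contravar; lra. }
    pose proof (Rabs_pos (VV t x)).
    assert (x ^ 4 * Rabs (VV t x) <= x ^ 4 * KV) by (apply Rmult_le_compat_l; lra).
    assert (x ^ 4 * Rabs (VV t x) * / (1 + x) ^ 3 <= x ^ 4 * Rabs (VV t x)).
    { rewrite <- (Rmult_1_r (x ^ 4 * Rabs (VV t x))) at 2. apply Rmult_le_compat_l. nra. lra. }
    lra.
Qed.

Lemma d_ind t KV : 1 < t -> (forall x, Rabs x <= 1 -> Rabs (VV t x) <= KV) ->
  forall J m, (2 <= m)%nat ->
  Rabs (dd t m) <= (2 / (t - 1) + KV) * (t / (t - 1)) * (/ INR m) ^ 4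
                   + Rabs (dd t (m + J)) * (/ t) ^ J.
Proof.
  intros ht hKV J. induction J as [|J IH]; intros m hm.
  - rewrite Nat.add_0_r. simpl pow. rewrite Rmult_1_r.
    assert (0 <= 2 / (t - 1) + KV).
    { pose proof (hKV 0 ltac:(rewrite Rabs_R0; lra)). pose proof (Rabs_pos (VV t 0)).
      assert (0 < 2 / (t - 1)) by (apply Rdiv_lt_0_compat; lra). lra. }
    assert (0 <= t / (t - 1)) by (apply Rlt_le, Rdiv_lt_0_compat; lra).
    assert (0 <= (/ INR m) ^ 4) by (apply pow_le; destruct (inv_INR_le m hm); lra).
    assert (0 <= (2 / (t - 1) + KV) * (t / (t - 1)) * (/ INR m) ^ 4).
    { apply Rmult_le_pos; [apply Rmult_le_pos|]; lra. }
    lra.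
  - set (K1 := 2 / (t - 1) + KV).
    assert (0 <= K1).
    { pose proof (hKV 0 ltac:(rewrite Rabs_R0; lra)). pose proof (Rabs_pos (VV t 0)).
      assert (0 < 2 / (t - 1)) by (apply Rdiv_lt_0_compat; lra). unfold K1; lra. }
    pose proof (r_bound t KV ht hKV m hm) as hr. fold K1 in hr.
    pose proof (IH (S m) ltac:(lia)) as hI.
    replace (S m + J)%nat with (m + S J)%nat in hI by lia.
    assert (hxm : (/ INR (S m)) ^ 4 <= (/ INR m) ^ 4).
    { apply pow_incr. split. apply Rlt_le, Rinv_0_lt_compat, lt_0_INR; lia.
      apply Rinv_le_contravar. apply lt_0_INR; lia. apply le_INR; lia. }
    assert (h1 : Rabs (dd t m) <= Rabs (dd t (S m)) / t + K1 * (/ INR m) ^ 4).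
    { replace (dd t m) with ((dd t m - dd t (S m) / t) + dd t (S m) / t) at 1 by ring.
      eapply Rle_trans. apply Rabs_triang. unfold Rdiv at 2. rewrite Rabs_mult, (Rabs_right (/ t)).
      2: apply Rle_ge, Rlt_le, Rinv_0_lt_compat; lra. unfold Rdiv; lra. }
    assert (0 < / t) by (apply Rinv_0_lt_compat; lra).
    assert (0 <= (/ INR m) ^ 4) by (apply pow_le; destruct (inv_INR_le m hm); lra).
    set (y := (/ INR m) ^ 4) in *. set (y' := (/ INR (S m)) ^ 4) in *.
    set (D := Rabs (dd t (m + S J))) in *.
    assert (hI2 : Rabs (dd t (S m)) / t <= K1 * (t / (t - 1)) * y / t + D * (/ t) ^ J / t).
    { unfold Rdiv. rewrite <- Rmult_plus_distr_r. apply Rmult_le_compat_r. lra.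
      eapply Rle_trans. exact hI. apply Rplus_le_compat_r. apply Rmult_le_compat_l.
      apply Rmult_le_pos. lra. apply Rlt_le, Rdiv_lt_0_compat; lra. exact hxm. }
    replace (K1 * (t / (t - 1)) * y) with (K1 * (t / (t - 1)) * y / t + K1 * y) by (field; lra).
    replace (D * (/ t) ^ S J) with (D * (/ t) ^ J / t) by (simpl; field; lra).
    lra.
Qed.

Lemma d_tail t KP m : 1 < t -> (2 <= m)%nat ->
  (forall y, Rabs y <= 1 -> Rabs (PP t y) <= KP) ->
  is_lim_seq (fun J => Rabs (dd t (m + J)) * (/ t) ^ J) 0.
Proof.
  intros ht hm hKP.
  assert (hq : 0 < / t < 1).
  { split. apply Rinv_0_lt_compat; lra. rewrite <- Rinv_1. apply Rinv_lt_contravar; lra. }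
  assert (E : forall J, dd t (m + J) * (/ t) ^ J =
     t ^ m * (LL t - lsp t (m + J)) - ln (INR (m + J)) * (/ t) ^ J / (t - 1)
     - PP t (/ INR (m + J)) * (/ t) ^ J).
  { intro J. unfold dd, u. rewrite pow_add.
    assert (H1 : t ^ J * (/ t) ^ J = 1) by (rewrite <- Rpow_mult_distr, Rinv_r, pow1; lra).
    transitivity (t ^ m * (LL t - lsp t (m + J)) * (t ^ J * (/ t) ^ J)
        - ln (INR (m + J)) * (/ t) ^ J / (t - 1) - PP t (/ INR (m + J)) * (/ t) ^ J).
    field; lra. rewrite H1; ring. }
  assert (La : is_lim_seq (fun J => t ^ m * (LL t - lsp t (m + J))) 0).
  { replace 0 with (t ^ m * (LL t - LL t)) by ring.
    apply is_lim_seq_mult'. apply is_lim_seq_const.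
    apply is_lim_seq_minus'. apply is_lim_seq_const.
    apply is_lim_seq_ext with (fun J => lsp t (J + m)). intro J; f_equal; lia.
    apply (is_lim_seq_incr_n (lsp t) m). apply lsp_lim; lra. }
  assert (Lb : is_lim_seq (fun J => ln (INR (m + J)) * (/ t) ^ J / (t - 1)) 0).
  { replace 0 with (0 / (t - 1)) by (field; lra).
    apply is_lim_seq_mult'. 2: apply is_lim_seq_const.
    apply is_lim_seq_le_le with (u := fun _ => 0)
       (w := fun J => INR m * (/ t) ^ J + INR J * (/ t) ^ J).
    - intro J. assert (0 <= (/ t) ^ J) by (apply pow_le; lra).
      assert (h1 : 1 <= INR (m + J)) by (apply (le_INR 1); lia).
      assert (0 <= ln (INR (m + J))) by (rewrite <- ln_1; apply ln_le; lra).
      pose proof (ln_le_id (INR (m + J)) ltac:(lra)). rewrite plus_INR in *.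
      split. apply Rmult_le_pos; lra. nra.
    - apply is_lim_seq_const.
    - replace 0 with (INR m * 0 + 0) by ring. apply is_lim_seq_plus'.
      apply is_lim_seq_mult'. apply is_lim_seq_const. apply geom_t; lra.
      apply JqJ; lra. }
  assert (Lc : is_lim_seq (fun J => PP t (/ INR (m + J)) * (/ t) ^ J) 0).
  { apply bounded_geom with KP. lra. intro J. apply hKP.
    assert (2 <= INR (m + J)) by (apply (le_INR 2); lia).
    rewrite Rabs_right. rewrite <- Rinv_1. apply Rinv_le_contravar; lra.
    apply Rle_ge, Rlt_le, Rinv_0_lt_compat; lra. }
  assert (L : is_lim_seq (fun J => dd t (m + J) * (/ t) ^ J) 0).
  { apply is_lim_seq_ext with (fun J => t ^ m * (LL t - lsp t (m + J)) - ln (INR (m + J)) * (/ t) ^ J / (t - 1)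
     - PP t (/ INR (m + J)) * (/ t) ^ J). intro J; symmetry; apply E.
    replace 0 with (0 - 0 - 0) by ring. apply is_lim_seq_minus'. apply is_lim_seq_minus'.
    exact La. exact Lb. exact Lc. }
  apply is_lim_seq_abs in L. simpl in L. rewrite Rabs_R0 in L.
  apply is_lim_seq_ext with (2 := L). intro J.
  rewrite Rabs_mult, (Rabs_right ((/ t) ^ J)). reflexivity. apply Rle_ge, pow_le; lra.
Qed.

Lemma d_bound t KV KP m : 1 < t -> (2 <= m)%nat ->
  (forall x, Rabs x <= 1 -> Rabs (VV t x) <= KV) ->
  (forall y, Rabs y <= 1 -> Rabs (PP t y) <= KP) ->
  Rabs (dd t m) <= (2 / (t - 1) + KV) * (t / (t - 1)) * (/ INR m) ^ 4.
Proof.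
  intros ht hm hKV hKP.
  pose proof (d_tail t KP m ht hm hKP) as L.
  assert (H := is_lim_seq_le (fun _ => Rabs (dd t m))
    (fun J => (2 / (t - 1) + KV) * (t / (t - 1)) * (/ INR m) ^ 4 + Rabs (dd t (m + J)) * (/ t) ^ J)
    (Rabs (dd t m)) ((2 / (t - 1) + KV) * (t / (t - 1)) * (/ INR m) ^ 4 + 0)).
  unfold Rbar_le in H. cut (Rabs (dd t m) <= (2 / (t - 1) + KV) * (t / (t - 1)) * (/ INR m) ^ 4 + 0). lra. apply H.
  - intro J. apply d_ind; assumption.
  - apply is_lim_seq_const.
  - apply is_lim_seq_plus'. apply is_lim_seq_const. exact L.
Qed.

Lemma cp_bound t x : 0 <= x <= 1 ->
  Rabs (cp t x) <= (Rabs (cc1 t) + Rabs (cc2 t) + Rabs (cc3 t)) * x.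
Proof.
  intro hx. unfold cp.
  assert (x ^ 2 <= x) by (simpl; nra). assert (x ^ 3 <= x) by (simpl; nra).
  assert (0 <= x ^ 2) by (apply pow_le; lra). assert (0 <= x ^ 3) by (apply pow_le; lra).
  eapply Rle_trans. apply Rabs_triang. eapply Rle_trans. apply Rplus_le_compat_r, Rabs_triang.
  rewrite !Rabs_mult, (Rabs_right x), (Rabs_right (x ^ 2)), (Rabs_right (x ^ 3)) by lra.
  pose proof (Rabs_pos (cc1 t)). pose proof (Rabs_pos (cc2 t)). pose proof (Rabs_pos (cc3 t)).
  nra.
Qed.

Theorem theorem22 (t : R) (ht : 1 < t) :
  exists (C : R) (N : nat), forall n : nat, (N <= n)%nat ->
    exists e : R, Rabs e <= C / INR n ^ 4 /\
      g t n = Rpower (sigma_t t) (t ^ n) * Rpower (INR n) (- / (t - 1))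
              * / (1 + corr t n + e).
Proof.
  assert (HKV : exists KV, forall x, Rabs x <= 1 -> Rabs (VV t x) <= KV).
  { eexists. intros x hx. unfold VV. bnd. }
  assert (HKW : exists KW, forall x, Rabs x <= 1 -> Rabs (WW t x) <= KW).
  { eexists. intros x hx. unfold WW. cbv zeta. bnd. }
  assert (HKP : exists KP, forall x, Rabs x <= 1 -> Rabs (PP t x) <= KP).
  { eexists. intros x hx. unfold PP. bnd. }
  destruct HKV as [KV hKV]. destruct HKW as [KW hKW]. destruct HKP as [KP hKP].
  set (q := Rabs (cc1 t) + Rabs (cc2 t) + Rabs (cc3 t)).
  assert (hq : 0 <= q) by (unfold q; pose proof (Rabs_pos (cc1 t)); pose proof (Rabs_pos (cc2 t)); pose proof (Rabs_pos (cc3 t)); lra).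
  set (A := (2 / (t - 1) + KV) * (t / (t - 1))).
  assert (hKW0 : 0 <= KW) by (pose proof (hKW 0 ltac:(rewrite Rabs_R0; lra)); pose proof (Rabs_pos (WW t 0)); lra).
  assert (hA : 0 <= A).
  { unfold A. pose proof (hKV 0 ltac:(rewrite Rabs_R0; lra)). pose proof (Rabs_pos (VV t 0)).
    assert (0 < 2 / (t - 1)) by (apply Rdiv_lt_0_compat; lra).
    assert (0 < t / (t - 1)) by (apply Rdiv_lt_0_compat; lra). apply Rmult_le_pos; lra. }
  set (K2 := 2 * q ^ 4 + KW).
  assert (hK2 : 0 <= K2) by (unfold K2; pose proof (pow_le q 4 hq); lra).
  set (B := A + K2).
  assert (hB : 0 <= B) by (unfold B; lra).
  destruct (INR_archimed 1 (2 + 2 * q + 2 * B) ltac:(lra)) as [N hN].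
  exists (3 * B), N. intros n hn.
  assert (hnN : INR N <= INR n) by (apply le_INR; lia).
  assert (hM : 2 + 2 * q + 2 * B < INR n) by lra.
  assert (hn2 : (2 <= n)%nat).
  { destruct (Nat.le_gt_cases 2 n) as [h|h]. exact h. assert (INR n <= INR 2) by (apply le_INR; lia). simpl in *; lra. }
  assert (hn0 : 0 < INR n) by lra.
  set (x := / INR n).
  assert (hxn : x * INR n = 1) by (unfold x; field; lra).
  assert (hx0 : 0 < x) by (unfold x; apply Rinv_0_lt_compat; lra).
  assert (hx1 : x <= / 2) by (unfold x; apply Rinv_le_contravar; lra).
  assert (hqx : q * x <= / 2) by nra.
  assert (hBx : B * x <= / 2) by nra.
  assert (hx4 : x ^ 4 <= x).
  { assert (x ^ 3 <= 1 ^ 3) by (apply pow_incr; lra). rewrite pow1 in H.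
    replace (x ^ 4) with (x * x ^ 3) by ring. nra. }
  assert (hx40 : 0 <= x ^ 4) by (apply pow_le; lra).
  set (c := corr t n).
  assert (hc : c = cp t x) by (unfold c, x; apply corr_eq; lra).
  assert (hcb : Rabs c <= q * x) by (rewrite hc; apply cp_bound; lra).
  assert (hc2 : Rabs c <= / 2) by lra.
  assert (hd : Rabs (dd t n) <= A * x ^ 4) by (apply (d_bound t KV KP n ht hn2 hKV hKP)).
  assert (h1c : 0 < 1 + c) by (apply abs_btw in hc2; lra).
  assert (hl : Rabs (ln (1 + c) - PP t x) <= K2 * x ^ 4).
  { replace (ln (1 + c) - PP t x) with ((ln (1 + c) - T3 c) + (T3 (cp t x) - PP t x)) by (rewrite hc; ring).
    rewrite W_id. eapply Rle_trans. apply Rabs_triang. unfold K2.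
    rewrite Rmult_plus_distr_r. apply Rplus_le_compat.
    - eapply Rle_trans. apply ln_taylor; exact hc2.
      assert (c ^ 4 <= (q * x) ^ 4).
      { assert (0 <= c ^ 4) by (replace (c ^ 4) with ((c * c) * (c * c)) by ring; nra).
        rewrite <- (Rabs_right (c ^ 4)) by lra. rewrite <- RPow_abs.
        apply pow_incr. split. apply Rabs_pos. exact hcb. }
      rewrite Rpow_mult_distr in H. lra.
    - rewrite Rabs_mult, (Rabs_right (x ^ 4)) by lra. rewrite (Rmult_comm KW).
      apply Rmult_le_compat_l. lra. apply hKW. rewrite Rabs_right; lra. }
  set (d' := u t n - ln (1 + c)).
  assert (hd' : Rabs d' <= B * x ^ 4).
  { replace d' with (dd t n + (PP t x - ln (1 + c))) by (unfold d', dd; fold x; ring).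
    eapply Rle_trans. apply Rabs_triang. rewrite Rabs_minus_sym. unfold B. lra. }
  assert (hd'2 : Rabs d' <= / 2) by nra.
  exists (exp (u t n) - 1 - c). split.
  - assert (he : exp (u t n) - 1 - c = (1 + c) * (exp d' - 1)).
    { replace (u t n) with (ln (1 + c) + d') by (unfold d'; ring).
      rewrite exp_plus, exp_ln by lra. ring. }
    rewrite he, Rabs_mult.
    replace (3 * B / INR n ^ 4) with (3 * B * x ^ 4) by (unfold x; rewrite pow_inv; field; lra).
    pose proof (exp_m1 d' hd'2). pose proof (Rabs_pos (exp d' - 1)).
    assert (Rabs (1 + c) <= 3 / 2) by (rewrite Rabs_right; apply abs_btw in hc2; lra).
    apply Rle_trans with (3 / 2 * (2 * Rabs d')). apply Rmult_le_compat; try lra. apply Rabs_pos.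
    lra.
  - rewrite main_id by lra. fold c.
    replace (1 + c + (exp (u t n) - 1 - c)) with (exp (u t n)) by ring.
    field. apply Rgt_not_eq, exp_pos.
Qed.
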